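(* Under the setting below, let $f\in\mathcal{F}$, $0<\epsilon_1\le|\mathcal{U}_A|$, and $\epsilon_{\mathrm{op}}=\alpha\epsilon_1/(4H|\mathcal{U}_A|^2|\mathcal{U}||\mathcal{O}|)$. Suppose $f'=\{m'_{(o,a,u),h},q'_0\}$ is any parameter tuple (not necessarily a valid PSR) with $\max_{o\in\mathcal{O},a\in\mathcal{A},h\in[H-1],u\in\mathcal{U}_{h+1}}\|m_{(o,a,u),h;f}-m'_{(o,a,u),h}\|_\infty\le\epsilon_{\mathrm{op}}$ and $\|q_{0;f}-q'_0\|_\infty\le\epsilon_{\mathrm{op}}$, and define $\mathbb{P}^\pi_{f'}(\tau_H)=e_{o_H}^\top M'_{o_{H-1},a_{H-1},H-1}\cdots M'_{o_1,a_1,1}q'_0\,\pi(\tau_H)$, where $M'_{o,a,h}$ has rows $(m'_{(o,a,u),h})^\top$. Then for every policy $\pi$, $\sum_{\tau_H}|\mathbb{P}^\pi_{f'}(\tau_H)-\mathbb{P}^\pi_f(\tau_H)|\le\epsilon_1$.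
   Context: Process: finite $\mathcal{O},\mathcal{A}$, horizon $H$; histories $\tau_h=(o_1,a_1,\dots,o_h,a_h)$; policies pick $a_h\sim\pi_h(\cdot\mid\tau_{h-1},o_h)$; $\pi(\tau_h)=\prod_{l\le h}\pi_l(a_l\mid\tau_{l-1},o_l)$; $\mathbb{P}^\pi_f(\tau_H)$ is the probability of $\tau_H$ under $\pi$ in model $f$. For a model $f$, a test starting at step $h$ is $t=(o_h,\dots,o_{h+W-1},a_h,\dots,a_{h+W-2})$; $\mathbb{P}_f(t\mid\tau_{h-1})$ is the probability of observing $o_{h:h+W-1}$ when executing $a_{h:h+W-2}$ after $\tau_{h-1}$ ($0$ if unreachable). A set $\mathcal{U}_h$ of tests starting at $h$ is a core test set if for every test $t$ starting at $h$ there is a history-independent $m_{t,h;f}$ with $\mathbb{P}_f(t\mid\tau_{h-1})=\langle m_{t,h;f},q_{\tau_{h-1};f}\rangle$, $q_{\tau_{h-1};f}=[\mathbb{P}_f(u\mid\tau_{h-1})]_{u\in\mathcal{U}_h}$; $q_{0;f}=[\mathbb{P}_f(u)]_{u\in\mathcal{U}_1}$; $M_{o,a,h;f}$ has rows $m_{(o,a,u),h;f}^\top$, $u\in\mathcal{U}_{h+1}$. $\mathcal{U}_{A,h}$: action sequences in $\mathcal{U}_h$; $|\mathcal{U}_A|=\max_h|\mathcal{U}_{A,h}|$; $|\mathcal{U}|=\max_h|\mathcal{U}_h|$. $d_{\mathrm{PSR},h;f}$ is the rank of the matrix with entries $\mathbb{P}_f(t\mid\tau_h)$. Core matrix $K_{h;f}$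 ($h\ge1$): columns $q_{\tau_h^1;f},\dots,q_{\tau_h^{d_{\mathrm{PSR},h;f}};f}$ for histories whose predictive states span all $q_{\tau_h;f}$, chosen to minimize $\|K_{h;f}^\dagger\|_{1\to1}$; $K_{0;f}=q_{0;f}$. Standing assumptions: every $f\in\mathcal{F}$ is a valid PSR with core test sets $\{\mathcal{U}_h\}_{h\in[H]}$ and $\|K_{h;f}^\dagger\|_{1\to1}\le1/\alpha$ for $h\in\{0,\dots,H-1\}$; every $o\in\mathcal{O}$ belongs to $\mathcal{U}_H$ and $m_{o,H;f}=e_o$ (standard basis vector indexing $o$ in $\mathcal{U}_H$). Convention: for $f\in\mathcal{F}$ the vectors $m_{(o,a,u),h;f}$ lie in the column space of $K_{h-1;f}$. *)

(* Defs.v *)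
From HB Require Import structures.
From mathcomp Require Import all_boot all_order all_algebra.
Set Implicit Arguments. Unset Strict Implicit. Unset Printing Implicit Defensive.
Import Order.TTheory GRing.Theory Num.Theory.
Local Open Scope ring_scope.

Section PSR.
Variables (R : realFieldType) (O A : finType).

(* A test (o_h,...,o_{h+W-1}, a_h,...,a_{h+W-2}) : observations and actions. *)
Definition test := (seq O * seq A)%type.
(* A history tau_h = (o_1,a_1,...,o_h,a_h), in chronological order. *)
Definition hist := seq (O * A).

Definition dtest : test := ([::], [::]).

(* The process (model f): K tau o = probability of observing o at step
   |tau|+1 given the history tau. *)
Variable K : hist -> O -> R.

Definition is_process : Prop :=
  (forall tau o, 0 <= K tau o) /\ (forall tau, \sum_(o : O) K tau o = 1).

(* A policy: pol tau o a = pi_h(a | tau_{h-1}, o_h) with h = |tau|+1. *)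
Definition is_policy (pol : hist -> O -> A -> R) : Prop :=
  (forall tau o a, 0 <= pol tau o a) /\
  (forall tau o, \sum_(a : A) pol tau o a = 1).

Fixpoint test_prob_raw (tau : hist) (os : seq O) (as_ : seq A) : R :=
  match os, as_ with
  | [:: o], [::] => K tau o
  | o :: os', a :: as' => K tau o * test_prob_raw (rcons tau (o, a)) os' as'
  | _, _ => 0
  end.

(* product of observation probabilities along a history: the history is
   reachable (under some policy) iff this is nonzero *)
Fixpoint hist_prob_aux (pre : hist) (s : hist) : R :=
  match s with
  | [::] => 1
  | (o, a) :: s' => K pre o * hist_prob_aux (rcons pre (o, a)) s'
  end.
Definition hist_prob (tau : hist) : R := hist_prob_aux [::] tau.

(* P_f(t | tau), 0 if tau unreachable *)
Definition Ptest (t : test) (tau : hist) : R :=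
  if hist_prob tau != 0 then test_prob_raw tau t.1 t.2 else 0.

Fixpoint traj_prob_aux (pol : hist -> O -> A -> R) (pre : hist) (s : hist) : R :=
  match s with
  | [::] => 1
  | (o, a) :: s' => K pre o * pol pre o a * traj_prob_aux pol (rcons pre (o, a)) s'
  end.
Definition Ptraj pol (tau : hist) : R := traj_prob_aux pol [::] tau.

Fixpoint pol_prob_aux (pol : hist -> O -> A -> R) (pre : hist) (s : hist) : R :=
  match s with
  | [::] => 1
  | (o, a) :: s' => pol pre o a * pol_prob_aux pol (rcons pre (o, a)) s'
  end.
Definition pol_prob pol (tau : hist) : R := pol_prob_aux pol [::] tau.

Definition test_at (H h : nat) (t : test) : bool :=
  [&& (1 <= h)%N, size t.1 == (size t.2).+1 & (h + size t.2 <= H)%N].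

Variable U : nat -> seq test.

Definition core_test_sets (H : nat) : Prop :=
  forall h, (1 <= h <= H)%N ->
    [/\ uniq (U h), all (test_at H h) (U h) &
     forall t, test_at H h t ->
       exists mt : test -> R, forall tau : hist, size tau = h.-1 ->
         Ptest t tau = \sum_(v <- U h) mt v * Ptest v tau].

Definition qcol (k : nat) (tau : hist) : 'cV[R]_(size (U k.+1)) :=
  \col_i Ptest (nth dtest (U k.+1) i) tau.

Definition Kmat (k : nat) (taus : seq hist) : 'M[R]_(size (U k.+1), size taus) :=
  \matrix_(i, j) Ptest (nth dtest (U k.+1) i) (nth [::] taus j).

(* Moore-Penrose pseudo-inverse of a matrix with linearly independent columns *)
Definition pinv n d (M : 'M[R]_(n, d)) : 'M[R]_(d, n) :=
  invmx (M^T *m M) *m M^T.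

Definition norm11 d n (M : 'M[R]_(d, n)) : R :=
  \big[Num.max/0]_(j < n) \sum_(i < d) `|M i j|.

(* Since the paper's K minimizes this norm, this is the paper's assumption. *)
Definition core_matrix_bound (k : nat) (alpha : R) : Prop :=
  exists taus : seq hist,
    [/\ all (fun tau => size tau == k) taus,
        \rank (Kmat k taus) = size taus,
        (forall tau : hist, size tau = k ->
           exists c : 'cV[R]_(size taus), qcol k tau = Kmat k taus *m c) &
        norm11 (pinv (Kmat k taus)) <= alpha^-1].

Definition in_qspan (k : nat) (v : test -> R) : Prop :=
  exists taus : seq hist, all (fun tau => size tau == k) taus /\
    exists c : 'cV[R]_(size taus),
      \col_(i < size (U k.+1)) v (nth dtest (U k.+1) i) = Kmat k taus *m c.

(* m h o a u = m_{(o,a,u),h;f}, a vector indexed by U_h *)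
Definition psr_params (H : nat) (m : nat -> O -> A -> test -> test -> R) : Prop :=
  forall h o a u, (1 <= h < H)%N -> u \in U h.+1 ->
    in_qspan h.-1 (m h o a u) /\
    forall tau : hist, size tau = h.-1 ->
      Ptest (o :: u.1, a :: u.2) tau = \sum_(v <- U h) m h o a u v * Ptest v tau.

Definition UA_card (H : nat) : nat :=
  \max_(1 <= h < H.+1) size (undup (map snd (U h))).
Definition U_card (H : nat) : nat :=
  \max_(1 <= h < H.+1) size (U h).

(* e_{o_H}^T M'_{o_{H-1},a_{H-1},H-1} ... M'_{o_1,a_1,1} b, starting at step h *)
Fixpoint fwd_eval (m' : nat -> O -> A -> test -> test -> R)
    (h : nat) (b : test -> R) (s : hist) : R :=
  match s with
  | [::] => 0
  | x :: s' =>
      match s' with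
      | [::] => b ([:: x.1], [::])
      | _ => fwd_eval m' h.+1
               (fun u => \sum_(v <- U h) m' h x.1 x.2 u v * b v) s'
      end
  end.

Definition Ptraj' m' (q0' : test -> R) pol (tau : hist) : R :=
  fwd_eval m' 1 q0' tau * pol_prob pol tau.

End PSR.

(* Main.v *)
Require Import Defs.
From HB Require Import structures.
From mathcomp Require Import all_boot all_order all_algebra.
From Stdlib Require Import FunctionalExtensionality.
From mathcomp Require Import ring lra.
Import Order.TTheory GRing.Theory Num.Theory.
Local Open Scope ring_scope.
Set Implicit Arguments. Unset Strict Implicit.

Section Gen.
Variables (R : realFieldType) (O A : finType).
Local Notation hist := (hist O A).
Local Notation test := (test O A).

Fixpoint SS (n : nat) (F : hist -> R) : R :=
  match n with 0 => F [::] | n'.+1 => \sum_(x : O * A) SS n' (fun s => F (x :: s)) end.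

Lemma SS_ext n F G : (forall s, size s = n -> F s = G s) -> SS n F = SS n G.
Proof.
elim: n F G => [|n IH] F G h /=; first exact: h.
apply: eq_bigr => x _; apply: IH => s hs; apply: h; by rewrite /= hs.
Qed.

Lemma SS_le n F G : (forall s, size s = n -> F s <= G s) -> SS n F <= SS n G.
Proof.
elim: n F G => [|n IH] F G h /=; first exact: h.
apply: ler_sum => x _; apply: IH => s hs; apply: h; by rewrite /= hs.
Qed.

Lemma SS_add n F G : SS n (fun s => F s + G s) = SS n F + SS n G.
Proof.
elim: n F G => [|n IH] F G //=; rewrite -big_split /=.
by apply: eq_bigr => x _; rewrite IH.
Qed.

Lemma SS_scale n c F : SS n (fun s => c * F s) = c * SS n F.
Proof.
elim: n F => [|n IH] F //=; rewrite mulr_sumr.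
by apply: eq_bigr => x _; rewrite IH.
Qed.

Lemma SS_sum (I : Type) (r : seq I) n (F : I -> hist -> R) :
  SS n (fun s => \sum_(j <- r) F j s) = \sum_(j <- r) SS n (F j).
Proof.
elim: n F => [|n IH] F //=; rewrite exchange_big /=.
by apply: eq_bigr => x _; rewrite (IH (fun j s => F j (x :: s))).
Qed.

Lemma SS_rcons n F : SS n.+1 F = SS n (fun s => \sum_(x : O * A) F (rcons s x)).
Proof.
elim: n F => [|n IH] F //.
transitivity (\sum_(y : O * A) SS n.+1 (fun s => F (y :: s))); first by [].
rewrite (eq_bigr (fun y => SS n (fun s => \sum_(x : O * A) F (y :: rcons s x)))) //.

Qed.

Lemma SS_tuple n F : \sum_(t : n.-tuple (O * A)) F (tval t) = SS n F.
Proof.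
elim: n F => [|n IH] F /=.
  rewrite (eq_bigr (fun _ => F [::])); last by move=> t _; rewrite tuple0.
  by rewrite sumr_const card_tuple expn0 mulr1n.
rewrite (reindex (fun p : (O * A) * n.-tuple (O * A) => [tuple of p.1 :: p.2])) /=.
  rewrite -(pair_bigA _ (fun x (t : n.-tuple (O * A)) => F (x :: t))) /=.
  by apply: eq_bigr => x _; exact: (IH (fun s => F (x :: s))).
apply: onW_bij.
exists (fun t : n.+1.-tuple (O * A) => (thead t, [tuple of behead t])).
  by case=> x t /=; rewrite theadE; congr pair; apply: val_inj.
by move=> t; rewrite [t in RHS]tuple_eta; apply: val_inj.
Qed.

Variable U : nat -> seq test.
Definition step (mm : nat -> O -> A -> test -> test -> R) (h : nat) (x : O * A)
  (b : test -> R) : test -> R := fun u => \sum_(v <- U h) mm h x.1 x.2 u v * b v.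

Fixpoint it mm h (b : test -> R) (s : hist) : test -> R :=
  match s with [::] => b | x :: s' => it mm h.+1 (step mm h x b) s' end.

Definition nrm h (b : test -> R) := \sum_(u <- U h) `|b u|.

Lemma fwd_rcons mm h b s x :
  fwd_eval U mm h b (rcons s x) = it mm h b s ([:: x.1], [::]).
Proof.
elim: s h b => [|y s IH] h b //=.
rewrite -IH /=. case E: (rcons s x) => [|z t] //.
by case: s IH E.
Qed.

Lemma it_lin2 mm h a c f g s u0 :
  it mm h (fun u => a * f u + c * g u) s u0 = a * it mm h f s u0 + c * it mm h g s u0.
Proof.
elim: s h f g => [|x s IH] h f g //=.
rewrite -IH; congr (it _ _ _ _ _); apply: functional_extensionality => u.
rewrite /step !mulr_sumr -big_split /=; apply: eq_bigr => v _.
by rewrite mulrDr !mulrA [a * _]mulrC [c * _]mulrC.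
Qed.

Lemma it_sum (I : Type) (r : seq I) (cf : I -> R) (F : I -> test -> R) mm h s u0 :
  it mm h (fun u => \sum_(j <- r) cf j * F j u) s u0 =
  \sum_(j <- r) cf j * it mm h (F j) s u0.
Proof.
elim: s h F => [|x s IH] h F //=.
rewrite -IH; congr (it _ _ _ _ _); apply: functional_extensionality => u.
rewrite /step; under eq_bigr do rewrite mulr_sumr.
rewrite exchange_big /=; apply: eq_bigr => j _; rewrite mulr_sumr.
by apply: eq_bigr => v _; rewrite mulrCA.
Qed.

Lemma it_ext_U mm h b1 b2 s :
  {in U h, b1 =1 b2} -> {in U (h + size s), it mm h b1 s =1 it mm h b2 s}.
Proof.
elim: s h b1 b2 => [|x s IH] h b1 b2 E /=; first by rewrite addn0.
have -> : step mm h x b1 = step mm h x b2.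
  apply: functional_extensionality => u; rewrite /step.
  by apply: eq_big_seq => v hv; rewrite E.
by [].
Qed.

End Gen.

Section Gen2.
Variables (R : realFieldType) (O A : finType).
Local Notation test := (test O A).
Variable U : nat -> seq test.

Lemma it_scale (mm : nat -> O -> A -> test -> test -> R) h (c : R) f s u0 :
  it U mm h (fun u => c * f u) s u0 = c * it U mm h f s u0.
Proof.
elim: s h f => [|x s IH] h f //=.
rewrite -IH; congr (it _ _ _ _ _ _); apply: functional_extensionality => u.
rewrite /step mulr_sumr; apply: eq_bigr => v _; by rewrite mulrCA.
Qed.

Lemma sum_nth (T : Type) (x0 : T) (s : seq T) (f : T -> R) :
  \sum_(v <- s) f v = \sum_(i < size s) f (nth x0 s i).
Proof. by rewrite (big_nth x0) big_mkord. Qed.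

Lemma unit_tr (p d : nat) (M : 'M[R]_(p, d)) : \rank M = d -> M^T *m M \in unitmx.
Proof.
move=> hr; rewrite -row_free_unit -kermx_eq0; apply/eqP/row_matrixP => i; rewrite row0.
set v := row i _.
have hv : v *m (M^T *m M) = 0 by apply/sub_kermxP; rewrite row_sub.
set z := v *m M^T.
have hz : z *m z^T = 0.
  by rewrite /z trmx_mul trmxK !mulmxA -(mulmxA v) hv mul0mx.
have z0 : z = 0.
  have hs : \sum_k z 0 k ^+ 2 = 0.
    transitivity ((z *m z^T) 0 0); last by rewrite hz mxE.
    by rewrite [RHS]mxE; apply: eq_bigr => k _; rewrite [z^T _ _]mxE expr2.
  apply/rowP => j; rewrite [RHS]mxE.
  move/psumr_eq0P: hs => /(_ (fun k _ => sqr_ge0 _) j isT) /eqP.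
  by rewrite sqrf_eq0 => /eqP.
apply: (row_free_inj (A := M^T)); first by rewrite /row_free mxrank_tr hr.
by rewrite /= -/z z0 mul0mx.
Qed.

Lemma vec_bound p q (M : 'M[R]_(p, q)) (v : 'cV[R]_q) :
  \sum_i `|(M *m v) i 0| <= norm11 M * \sum_j `|v j 0|.
Proof.
under eq_bigr do rewrite mxE.
apply: le_trans (_ : \sum_i \sum_j `|M i j| * `|v j 0| <= _).
  apply: ler_sum => i _; apply: le_trans (ler_norm_sum _ _ _) _.
  by apply: ler_sum => j _; rewrite normrM.
rewrite exchange_big mulr_sumr /=; apply: ler_sum => j _.
rewrite -mulr_suml ler_wpM2r //.
exact: (le_bigmax _ (fun j => \sum_i `|M i j|)).
Qed.

Lemma sum_const_seq (T : Type) (s : seq T) (c : R) : \sum_(u <- s) c = (size s)%:R * c.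
Proof.
elim: s => [|x s IH]; first by rewrite big_nil mul0r.
by rewrite big_cons IH /= -nat1r mulrDl mul1r.
Qed.

Lemma sub_sum_le (T : eqType) (l1 l2 : seq T) (f : T -> R) :
  uniq l1 -> uniq l2 -> {subset l1 <= l2} -> (forall x, 0 <= f x) ->
  \sum_(x <- l1) f x <= \sum_(x <- l2) f x.
Proof.
move=> u1 u2 sub f0.
apply: le_trans (_ : _ <= \sum_(x <- l2 | x \in l1) f x) _.
  have pe : perm_eq [seq x <- l2 | x \in l1] l1.
    apply: uniq_perm; [exact: filter_uniq | exact: u1 | move=> x].
    rewrite mem_filter; apply/andP/idP => [[]//|h]; split=> //; exact: sub.
  by rewrite -[X in _ <= X]big_filter (perm_big l1 pe).
rewrite [X in _ <= X](bigID (fun x => x \in l1)) /= lerDl.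
by apply: sumr_ge0.
Qed.

End Gen2.

Section Proc.
Variables (R : realFieldType) (O A : finType).
Local Notation hist := (hist O A).
Local Notation test := (test O A).
Variable K : hist -> O -> R.
Variable pol : hist -> O -> A -> R.
Hypothesis HK : is_process K.
Hypothesis Hpol : is_policy pol.

Definition jp (tau : hist) (u : test) := hist_prob K tau * test_prob_raw K tau u.1 u.2.

Lemma hpa_cat p s1 s2 :
  hist_prob_aux K p (s1 ++ s2) = hist_prob_aux K p s1 * hist_prob_aux K (p ++ s1) s2.
Proof.
elim: s1 p => [|[o a] s1 IH] p /=; first by rewrite cats0 mul1r.
by rewrite IH cat_rcons mulrA.
Qed.

Lemma hp_cat tau s : hist_prob K (tau ++ s) = hist_prob K tau * hist_prob_aux K tau s.
Proof. by rewrite /hist_prob hpa_cat. Qed.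

Lemma hp_rcons tau x : hist_prob K (rcons tau x) = hist_prob K tau * K tau x.1.
Proof. by rewrite -cats1 hp_cat; case: x => o a /=; rewrite mulr1. Qed.

Lemma hpa_ge0 p s : 0 <= hist_prob_aux K p s.
Proof.
elim: s p => [|[o a] s IH] p //=.
by rewrite mulr_ge0 //; case: HK.
Qed.

Lemma hp_ge0 tau : 0 <= hist_prob K tau.
Proof. exact: hpa_ge0. Qed.

Lemma pol_ge0 p s : 0 <= pol_prob_aux pol p s.
Proof.
elim: s p => [|[o a] s IH] p //=.
by rewrite mulr_ge0 //; case: Hpol.
Qed.

Lemma tpr_ge0 tau os as_ : 0 <= test_prob_raw K tau os as_.
Proof.
elim: os tau as_ => [|o os IH] tau [|a as_] //=.
- by case: os IH => // _; case: HK.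
- by case: os IH => [|o' os] IH; rewrite mulr_ge0 //; case: HK.
Qed.

Lemma tpr_cons tau o os a as_ :
  test_prob_raw K tau (o :: os) (a :: as_) = K tau o * test_prob_raw K (rcons tau (o, a)) os as_.
Proof. by case: os. Qed.

Lemma Ptest_jp u tau : Ptest K u tau = (hist_prob K tau)^-1 * jp tau u.
Proof.
rewrite /Ptest /jp; case: eqP => [->|/eqP h]; first by rewrite invr0 !mul0r.
by rewrite mulrA mulVf // mul1r.
Qed.

Lemma traj_split p s :
  traj_prob_aux K pol p s = hist_prob_aux K p s * pol_prob_aux pol p s.
Proof.
elim: s p => [|[o a] s IH] p /=; first by rewrite mulr1.
by rewrite IH; rewrite !mulrA; congr (_ * _); rewrite -!mulrA; congr (_ * _); rewrite mulrC.
Qed.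

Lemma pol_rcons p s x :
  pol_prob_aux pol p (rcons s x) = pol_prob_aux pol p s * pol (p ++ s) x.1 x.2.
Proof.
elim: s p => [|[o a] s IH] p /=; first by case: x => o a /=; rewrite cats0 mulr1 mul1r.
by rewrite IH cat_rcons mulrA.
Qed.

Lemma mixture n p1 p2 :
  SS n (fun s => pol_prob_aux pol p1 s * hist_prob_aux K p2 s) = 1.
Proof.
elim: n p1 p2 => [|n IH] p1 p2 /=; first by rewrite mulr1.
transitivity (\sum_(x : O * A) pol p1 x.1 x.2 * K p2 x.1).
  apply: eq_bigr => [[o a]] _ /=.
  rewrite -[RHS]mulr1 -(IH (rcons p1 (o, a)) (rcons p2 (o, a))) -SS_scale.
  by apply: SS_ext => s _; rewrite !mulrA; congr (_ * _); rewrite -!mulrA; congr (_ * _); rewrite mulrC.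
rewrite -(pair_bigA _ (fun o a => pol p1 o a * K p2 o)) /=.
case: HK => _ HK1; rewrite -(HK1 p2); apply: eq_bigr => o _.
by rewrite -mulr_suml; case: Hpol => _ ->; rewrite mul1r.
Qed.

Lemma sum_ind_uniq (T : eqType) (W : seq T) (a : T) (c : R) :
  uniq W -> \sum_(w <- W) (if a == w then c else 0) = if a \in W then c else 0.
Proof.
move=> uW; case: (boolP (a \in W)) => ha.
  rewrite (big_rem a ha) /= eqxx big1_seq ?addr0 // => w /andP[_ hw].
  move: hw; rewrite mem_rem_uniq // inE => /andP[hwa _].
  by rewrite eq_sym (negbTE hwa).
rewrite big1_seq // => w /andP[_ hw].
by case: eqP => // e; rewrite e hw in ha.
Qed.

Lemma sum_by_head (L : seq (seq O)) (F : seq O -> R) : F [::] = 0 ->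
  \sum_(os <- L) F os =
  \sum_(o : O) \sum_(os <- [seq behead os | os <- L & ohead os == Some o]) F (o :: os).
Proof.
move=> F0.
transitivity (\sum_(os <- L) \sum_(o : O) (if ohead os == Some o then F os else 0)).
  apply: eq_bigr => [[|o0 os]] _ /=; first by rewrite big1.
  rewrite (bigD1 o0) //= eqxx big1 ?addr0 // => o /negbTE ho.
  by case: eqP => // [[e]]; rewrite e eqxx in ho.
rewrite exchange_big /=; apply: eq_bigr => o _.
rewrite -big_mkcond -big_filter big_map; apply: eq_big_seq => os.
by rewrite mem_filter; case: os => //= o' os /andP[/eqP [->]].
Qed.

Lemma uniq_head (L : seq (seq O)) o :
  uniq L -> uniq [seq behead os | os <- L & ohead os == Some o].
Proof.
move=> uL; rewrite map_inj_in_uniq ?filter_uniq //.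
move=> [|a s] [|b t]; rewrite !mem_filter //= => /andP[/eqP[->] _] /andP[/eqP[->] _].
by move=> ->.
Qed.

Lemma Lsum_obs w tau (L : seq (seq O)) :
  uniq L -> \sum_(os <- L) test_prob_raw K tau os w <= 1.
Proof.
elim: w tau L => [|a w IH] tau L uL.
  rewrite (@sum_by_head L (fun os => test_prob_raw K tau os [::])) //.
  case: HK => HK0 HK1; rewrite -(HK1 tau); apply: ler_sum => o _.
  rewrite (eq_bigr (fun os => if [::] == os then K tau o else 0)); last first.
    by move=> [|x s] _.
  rewrite sum_ind_uniq ?uniq_head //; case: ifP => //.
rewrite (@sum_by_head L (fun os => test_prob_raw K tau os (a :: w))) //.
case: HK => HK0 HK1; rewrite -(HK1 tau); apply: ler_sum => o _.
under eq_bigr do rewrite tpr_cons.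
rewrite -mulr_sumr; apply: ler_piMr => //.
by apply: IH; rewrite uniq_head.
Qed.

Lemma Lgroup (Us : seq test) tau : uniq Us ->
  \sum_(u <- Us) test_prob_raw K tau u.1 u.2 <= (size (undup (map snd Us)))%:R.
Proof.
move=> uU; set W := undup (map snd Us).
rewrite (eq_big_seq (fun u => \sum_(w <- W) (if u.2 == w then test_prob_raw K tau u.1 u.2 else 0))); last first.
  move=> u hu; rewrite sum_ind_uniq ?undup_uniq //.
  by rewrite mem_undup map_f.
rewrite exchange_big /= -sum1_size natr_sum; apply: ler_sum => w _.
rewrite -big_mkcond -big_filter.
rewrite (eq_big_seq (fun u => test_prob_raw K tau u.1 w)); last first.
  by move=> u; rewrite mem_filter => /andP[/eqP -> _].
rewrite -(big_map fst xpredT (fun os => test_prob_raw K tau os w)).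
apply: Lsum_obs; rewrite map_inj_in_uniq ?filter_uniq //.
move=> [a b] [c d]; rewrite !mem_filter /= => /andP[/eqP -> _] /andP[/eqP -> _] /= ->.
by [].
Qed.

End Proc.

Section Main.
Variables (R : realFieldType) (O A : finType) (H : nat).
Local Notation hist := (hist O A).
Local Notation test := (test O A).
Variables (U : nat -> seq test) (K : hist -> O -> R)
  (m : nat -> O -> A -> test -> test -> R) (alpha eps1 : R)
  (m' : nat -> O -> A -> test -> test -> R) (q0' : test -> R)
  (pol : hist -> O -> A -> R).

Local Notation N := (UA_card U H).
Local Notation Uc := (U_card U H).
Definition eps_op := alpha * eps1 /
      (4 * H%:R * ((UA_card U H)%:R) ^+ 2 * (U_card U H)%:R * #|O|%:R).

Hypothesis HH : (0 < H)%N.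
Hypothesis HK : is_process K.
Hypothesis Hcore : core_test_sets K U H.
Hypothesis Halpha : 0 < alpha.
Hypothesis Hcm : forall k, (k < H)%N -> core_matrix_bound K U k alpha.
Hypothesis HUo : forall o : O, ([:: o], [::]) \in U H.
Hypothesis Hpsr : psr_params K U H m.
Hypothesis He1 : 0 < eps1.
Hypothesis He1N : eps1 <= (UA_card U H)%:R.
Hypothesis Hm' : forall h o a u v, (1 <= h < H)%N -> u \in U h.+1 -> v \in U h ->
     `|m h o a u v - m' h o a u v| <= eps_op.
Hypothesis Hq0 : forall u, u \in U 1%N -> `|Ptest K u [::] - q0' u| <= eps_op.
Hypothesis Hpol : is_policy pol.

Local Notation P := (pol_prob_aux pol).
Definition q (tau : hist) := fun v => Ptest K v tau.

Lemma L_uniqU k : (1 <= k <= H)%N -> uniq (U k).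
Proof. by move=> hk; case: (Hcore hk). Qed.

Lemma L_sizeN k : (1 <= k <= H)%N -> (size (undup (map snd (U k))) <= N)%N.
Proof.
move=> hk; rewrite /UA_card.
by apply: (@leq_bigmax_seq _ (index_iota 1 H.+1) xpredT (fun h => size (undup (map snd (U h))))); rewrite // mem_index_iota ltnS.
Qed.

Lemma L_sizeU k : (1 <= k <= H)%N -> (size (U k) <= Uc)%N.
Proof.
move=> hk; rewrite /U_card.
by apply: (@leq_bigmax_seq _ (index_iota 1 H.+1) xpredT (fun h => size (U h))); rewrite // mem_index_iota ltnS.
Qed.

Lemma tpr_sum_N k tau : (1 <= k <= H)%N ->
  \sum_(u <- U k) test_prob_raw K tau u.1 u.2 <= N%:R.
Proof.
move=> hk; apply: le_trans (Lgroup HK tau (L_uniqU hk)) _.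
by rewrite ler_nat L_sizeN.
Qed.

Lemma O_inh : exists o0 : O, True.
Proof.
case: (pickP (@predT O)) => [o0 _|h0]; first by exists o0.
case: HK => _ /(_ [::]); rewrite big_pred0 // => /eqP; rewrite eq_sym oner_eq0 //.
Qed.

Lemma N_pos : (0 < N)%N.
Proof.
case: O_inh => o0 _; apply: leq_trans (L_sizeN (k := H) _); last by rewrite HH leqnn.
have : [::] \in undup (map snd (U H)) by rewrite mem_undup; apply/mapP; exists ([:: o0], [::]).
by case: (undup _).
Qed.

Lemma Uc_pos : (0 < Uc)%N.
Proof.
case: O_inh => o0 _; apply: leq_trans (L_sizeU (k := H) _); last by rewrite HH leqnn.
by have := HUo o0; case: (U H).
Qed.

Lemma O_pos : (0 < #|O|)%N.
Proof. by case: O_inh => o0 _; apply/card_gt0P; exists o0. Qed.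

Lemma F1 h tau o a u : size tau = h.-1 -> (1 <= h < H)%N -> u \in U h.+1 ->
  step U m h (o, a) (jp K tau) u = jp K (rcons tau (o, a)) u.
Proof.
move=> hs hh hu; rewrite /step /jp hp_rcons /=.
case: (Hpsr o a hh hu) => _ /(_ tau hs); rewrite /Ptest.
case: eqP => [->|/eqP hne].
  by rewrite !mul0r => _; apply: big1 => v _; rewrite mul0r mulr0.
move=> E.
have {}E : K tau o * test_prob_raw K (rcons tau (o, a)) u.1 u.2 =
    \sum_(v <- U h) m h o a u v * test_prob_raw K tau v.1 v.2.
  by rewrite -tpr_cons; exact: E.
by rewrite -mulrA E mulr_sumr; apply: eq_bigr => v _; rewrite mulrCA.
Qed.

Lemma F3 s h tau : size tau = h.-1 -> (1 <= h)%N -> (h + size s <= H)%N ->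
  {in U (h + size s), it U m h (jp K tau) s =1 jp K (tau ++ s)}.
Proof.
elim: s h tau => [|x s IH] h tau hs h1 hH u hu /=; first by rewrite cats0.
have hu' : u \in U (h.+1 + size s) by rewrite addSnnS.
rewrite (it_ext_U (b2 := jp K (rcons tau x)) _ _ hu'); last first.
  case: x hH hu hu' => [o a] hH hu hu' v hv; apply: F1 => //.
  by rewrite h1 /=; apply: leq_trans hH; rewrite /= addnS ltnS leq_addr.
rewrite IH //; first by rewrite cat_rcons.
- by rewrite size_rcons hs prednK.
- by rewrite addSnnS.
Qed.

Lemma Ptest_le u tau : `|Ptest K u tau| <= test_prob_raw K tau u.1 u.2.
Proof.
rewrite /Ptest; case: ifP => _; first by rewrite ger0_norm // tpr_ge0.
by rewrite normr0 tpr_ge0.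
Qed.

Lemma alpha_le_N : alpha <= N%:R.
Proof.
case: (Hcm HH) => taus [hall hrank hspan hnorm].
set Kt := Kmat K U 0 taus.
have [d0|dpos] := posnP (size taus).
  exfalso.
  have q00 : forall u, u \in U 1 -> Ptest K u [::] = 0.
    move=> u hu; have [c hc] := hspan [::] erefl.
    have hidx : (index u (U 1) < size (U 1))%N by rewrite index_mem.
    move/matrixP: hc => /(_ (Ordinal hidx) 0); rewrite !mxE /= nth_index // => ->.
    apply: big1 => j _; suff : (j < 0)%N by []. by rewrite -d0 ltn_ord.
  case: (Hcore (h := 1) _) => [|_ _ hc]; first by rewrite leqnn HH.
  have K0 : forall o, K [::] o = 0.
    move=> o; have [mt hmt] := hc ([:: o], [::]) (introT and3P (And3 (leqnn 1) (eqxx 1) HH)).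
    move: (hmt [::] erefl); rewrite big1_seq; last by move=> v /andP[_ hv]; rewrite q00 // mulr0.
    by rewrite /Ptest /= oner_neq0.
  case: HK => _ /(_ [::]); rewrite big1 => [/eqP|o _]; [by rewrite eq_sym oner_eq0 | exact: K0].
have hunit := unit_tr hrank.
have hPK : pinv Kt *m Kt = 1%:M by rewrite /pinv -mulmxA mulVmx.
set j0 : 'I_(size taus) := Ordinal dpos.
have := vec_bound (pinv Kt) (\col_i Kt i j0).
have e : forall i, (pinv Kt *m (\col_i Kt i j0)) i 0 = (1%:M : 'M[R]_(size taus)) i j0.
  by move=> i; rewrite -hPK !mxE; apply: eq_bigr => l _; rewrite ?mxE.
rewrite (eq_bigr (fun i => `|(1%:M : 'M[R]_(size taus)) i j0|)); last by move=> i _; rewrite e.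
rewrite (bigD1 j0) //= mxE eqxx mulr1n normr1 big1 ?addr0; last first.
  by move=> i /negbTE hi; rewrite mxE hi mulr0n normr0.
have hS : \sum_j `|(\col_i Kt i j0) j 0| <= N%:R.
  rewrite (eq_bigr (fun j : 'I_(size (U 1)) => `|Ptest K (nth (dtest O A) (U 1) j) (nth [::] taus j0)|)); last first.
    by move=> j _; rewrite !mxE.
  rewrite -(sum_nth (dtest O A) (U 1) (fun u => `|Ptest K u (nth [::] taus j0)|)).
  apply: le_trans (tpr_sum_N (k := 1) (nth [::] taus j0) _); last by rewrite leqnn HH.
  by apply: ler_sum => u _; apply: Ptest_le.
move=> h1.
have h2 : 1 <= alpha^-1 * N%:R.
  apply: le_trans h1 _; apply: le_trans (ler_wpM2r (sumr_ge0 _ _) hnorm) _.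
    by move=> j _; rewrite normr_ge0.
  by apply: ler_wpM2l => //; rewrite invr_ge0 ltW.
by move: h2; rewrite -(ler_pM2l Halpha) mulr1 mulrA mulfV ?mul1r // gt_eqF.
Qed.

Lemma Lq s h tau : size tau = h.-1 -> (1 <= h)%N -> (h + size s <= H)%N ->
  nrm U (h + size s) (it U m h (q tau) s) <= hist_prob_aux K tau s * N%:R.
Proof.
move=> hs h1 hH; rewrite /nrm.
have hq : q tau = fun v => (hist_prob K tau)^-1 * jp K tau v.
  by apply: functional_extensionality => v; rewrite /q Ptest_jp.
rewrite (eq_big_seq (fun u => ((hist_prob K tau)^-1 * hist_prob K tau * hist_prob_aux K tau s) *
            test_prob_raw K (tau ++ s) u.1 u.2)); last first.
  move=> u hu; rewrite hq it_scale (F3 hs) // /jp hp_cat !mulrA ger0_norm //.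
  by rewrite !mulr_ge0 ?invr_ge0 ?hp_ge0 ?hpa_ge0 ?tpr_ge0.
rewrite -mulr_sumr; apply: ler_pM.
- by rewrite !mulr_ge0 ?invr_ge0 ?hp_ge0 ?hpa_ge0.
- by apply: sumr_ge0 => u _; apply: tpr_ge0.
- have [->|hne] := eqVneq (hist_prob K tau) 0; first by rewrite invr0 !mul0r hpa_ge0.
  by rewrite mulVf // mul1r.
- by apply: tpr_sum_N; rewrite hH andbT; apply: leq_trans h1 (leq_addr _ _).
Qed.

Lemma LqS n h pre tau : size tau = h.-1 -> (1 <= h)%N -> (h + n <= H)%N ->
  SS n (fun s => P pre s * nrm U (h + n) (it U m h (q tau) s)) <= N%:R.
Proof.
move=> hs h1 hH.
apply: le_trans (_ : SS n (fun s => N%:R * (P pre s * hist_prob_aux K tau s)) <= _).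
  apply: SS_le => s ss; rewrite mulrCA; apply: ler_wpM2l; first exact: pol_ge0.
  by rewrite mulrC -ss; apply: Lq => //; rewrite ss.
by rewrite SS_scale mixture // mulr1.
Qed.

Lemma nrm_ge0 h (b : test -> R) : 0 <= nrm U h b.
Proof. by apply: sumr_ge0 => u _; apply: normr_ge0. Qed.

Lemma NA_ge0 : 0 <= N%:R / alpha.
Proof. by apply: divr_ge0; [apply: ler0n | apply: ltW]. Qed.

Lemma NA_ge1 : 1 <= N%:R / alpha.
Proof. by rewrite ler_pdivlMr // mul1r alpha_le_N. Qed.

Lemma Tbound n h pre w : (1 <= h)%N -> (h + n <= H)%N ->
  SS n (fun s => P pre s * nrm U (h + n) (it U m h w s)) <= N%:R / alpha * nrm U h w.
Proof.
case: n => [|n] h1 hH.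
  rewrite /= addn0 mul1r -{1}[nrm U h w]mul1r; apply: ler_wpM2r; [exact: nrm_ge0 | exact: NA_ge1].
case: h h1 hH => [|k] // _ hH.
have hk : (k < H)%N by apply: leq_trans hH; rewrite addSn ltnS leq_addr.
have hk2 : (1 <= k.+1 < H)%N by rewrite /=; apply: leq_trans hH; rewrite addnS ltnS leq_addr.
case: (Hcm hk) => taus [hall hrank hspan hnorm].
set Kt := Kmat K U k taus.
have hunit := unit_tr hrank.
set wc := \col_i w (nth (dtest O A) (U k.+1) i) : 'cV[R]_(size (U k.+1)).
set xb := pinv Kt *m wc.
set r := wc - Kt *m xb.
have hKr : Kt^T *m r = 0.
  by rewrite /r mulmxBr /xb /pinv !mulmxA mulmxV // mul1mx subrr.
have hq : forall tau, size tau = k -> (qcol K U k tau)^T *m r = 0.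
  move=> tau hs; have [c ->] := hspan tau hs.
  by rewrite trmx_mul -mulmxA hKr mulmx0.
have hm : forall o a u, u \in U k.+2 ->
    \sum_(i < size (U k.+1)) m k.+1 o a u (nth (dtest O A) (U k.+1) i) * r i 0 = 0.
  move=> o a u hu.
  case: (Hpsr o a hk2 hu) => [[taus' [hall' [c hc]]] _].
  set mc := \col_(i < size (U k.+1)) m k.+1 o a u (nth (dtest O A) (U k.+1) i).
  have hc' : mc = Kmat K U k taus' *m c := hc.
  have hK' : (Kmat K U k taus')^T *m r = 0.
    apply/matrixP => j z; rewrite [RHS]mxE (ord1 z).
    have hj : size (nth [::] taus' j) = k by apply/eqP; apply: (allP hall'); apply: mem_nth.
    have := congr1 (fun M : 'M_1 => M 0 0) (hq _ hj); rewrite /= [RHS]mxE => <-.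
    by rewrite !mxE; apply: eq_bigr => i _; rewrite !mxE.
  transitivity ((mc^T *m r) 0 0).
    by rewrite mxE; apply: eq_bigr => i _; rewrite !mxE.
  by rewrite hc' trmx_mul -mulmxA hK' mulmx0 mxE.
have KC : forall x u, u \in U k.+2 -> step U m k.+1 x w u =
    \sum_(j < size taus) xb j 0 * step U m k.+1 x (q (nth [::] taus j)) u.
  move=> [o a] u hu.
  have e1 : step U m k.+1 (o, a) w u =
      \sum_(i < size (U k.+1)) m k.+1 o a u (nth (dtest O A) (U k.+1) i) * wc i 0.
    by rewrite /step (sum_nth (dtest O A)); apply: eq_bigr => i _; rewrite mxE.
  have e2 : \sum_(j < size taus) xb j 0 * step U m k.+1 (o, a) (q (nth [::] taus j)) u =
      \sum_(i < size (U k.+1)) m k.+1 o a u (nth (dtest O A) (U k.+1) i) * (Kt *m xb) i 0.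
    rewrite (eq_bigr (fun j => \sum_(i < size (U k.+1))
        xb j 0 * (m k.+1 o a u (nth (dtest O A) (U k.+1) i) * Kt i j))); last first.
      move=> j _; rewrite /step (sum_nth (dtest O A)) mulr_sumr.
      by apply: eq_bigr => i _; rewrite /Kt /Kmat mxE.
    rewrite exchange_big; apply: eq_bigr => i _; rewrite mxE mulr_sumr.
    by apply: eq_bigr => j _; rewrite mulrCA [xb j 0 * _]mulrC.
  rewrite e1 e2; apply/eqP; rewrite -subr_eq0 -sumrB; apply/eqP.
  apply: etrans (hm o a u hu); apply: eq_bigr => i _.
  by rewrite -mulrBr /r !mxE.
have hT : forall s, size s = n.+1 -> nrm U (k.+1 + n.+1) (it U m k.+1 w s) <=
    \sum_(j < size taus) `|xb j 0| * nrm U (k.+1 + n.+1) (it U m k.+1 (q (nth [::] taus j)) s).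
  case=> [|x s] // [hs]; rewrite /nrm.
  rewrite (eq_big_seq (fun u => `|\sum_(j < size taus) xb j 0 *
       it U m k.+1 (q (nth [::] taus j)) (x :: s) u|)); last first.
    move=> u hu /=.
    have hu' : u \in U (k.+2 + size s) by rewrite hs addSnnS.
    rewrite (it_ext_U (b2 := fun u => \sum_(j < size taus) xb j 0 *
       step U m k.+1 x (q (nth [::] taus j)) u) _ _ hu'); last by move=> v hv; apply: KC.
    by rewrite it_sum.
  apply: le_trans (_ : _ <= \sum_(u <- U (k.+1 + n.+1)) \sum_(j < size taus)
      `|xb j 0| * `|it U m k.+1 (q (nth [::] taus j)) (x :: s) u|) _.
    apply: ler_sum => u _; apply: le_trans (ler_norm_sum _ _ _) _.
    by apply: ler_sum => j _; rewrite normrM.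
  by rewrite exchange_big; apply: ler_sum => j _; rewrite mulr_sumr.
apply: le_trans (_ : SS n.+1 (fun s => P pre s * \sum_(j < size taus) `|xb j 0| *
    nrm U (k.+1 + n.+1) (it U m k.+1 (q (nth [::] taus j)) s)) <= _).
  by apply: SS_le => s hs; apply: ler_wpM2l; [exact: pol_ge0 | exact: hT].
rewrite (SS_ext (G := fun s => \sum_(j < size taus) `|xb j 0| * (P pre s *
    nrm U (k.+1 + n.+1) (it U m k.+1 (q (nth [::] taus j)) s)))); last first.
  by move=> s _; rewrite mulr_sumr; apply: eq_bigr => j _; rewrite mulrCA.
rewrite SS_sum.
apply: le_trans (_ : \sum_(j < size taus) `|xb j 0| * N%:R <= _).
  apply: ler_sum => j _; rewrite SS_scale; apply: ler_wpM2l => //; apply: LqS => //.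
  by apply/eqP; apply: (allP hall); apply: mem_nth.
rewrite -mulr_suml.
have hx : \sum_j `|xb j 0| <= alpha^-1 * nrm U k.+1 w.
  apply: le_trans (vec_bound _ _) _.
  rewrite /nrm (sum_nth (dtest O A)).
  rewrite (eq_bigr (fun i : 'I_(size (U k.+1)) => `|w (nth (dtest O A) (U k.+1) i)|)); last by move=> i _; rewrite mxE.
  by apply: ler_wpM2r => //; apply: sumr_ge0 => i _; apply: normr_ge0.
apply: le_trans (ler_wpM2r (ler0n _ _) hx) _.
by rewrite [X in X <= _]mulrC mulrA.
Qed.

Lemma eps_ge0 : 0 <= eps_op.
Proof.
by rewrite /eps_op divr_ge0 // ?mulr_ge0 ?exprn_ge0 ?ler0n // ltW.
Qed.

Lemma Mdiff h x b : (1 <= h < H)%N ->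
  nrm U h.+1 (fun u => step U m' h x b u - step U m h x b u) <= Uc%:R * eps_op * nrm U h b.
Proof.
move=> hh; rewrite /nrm.
apply: le_trans (_ : \sum_(u <- U h.+1) (eps_op * \sum_(v <- U h) `|b v|) <= _).
  rewrite big_seq [X in _ <= X]big_seq; apply: ler_sum => u hu.
  rewrite /step -sumrB; apply: le_trans (ler_norm_sum _ _ _) _.
  rewrite mulr_sumr big_seq [X in _ <= X]big_seq; apply: ler_sum => v hv.
  rewrite -mulrBl normrM ler_wpM2r // distrC; exact: Hm'.
rewrite sum_const_seq mulrA; apply: ler_wpM2r; first exact: nrm_ge0.
apply: ler_wpM2r; first exact: eps_ge0.
by rewrite ler_nat L_sizeU //; case/andP: hh => _ hH; rewrite hH.
Qed.

Lemma eqle (x y : R) : x = y -> x <= y.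
Proof. by move=> ->. Qed.

Definition gam := N%:R / alpha * Uc%:R * eps_op * #|O|%:R.

Lemma SS_S n (F : hist -> R) : SS n.+1 F = \sum_(x : O * A) SS n (fun s => F (x :: s)).
Proof. by []. Qed.

Lemma Spol pre : \sum_(x : O * A) pol pre x.1 x.2 = #|O|%:R.
Proof.
rewrite -(pair_bigA _ (fun o a => pol pre o a)) /=.
rewrite (eq_bigr (fun _ => 1)); last by move=> o _; case: Hpol => _ ->.
by rewrite sumr_const.
Qed.

Lemma Ebound n h pre b : (1 <= h)%N -> (h + n <= H)%N ->
  SS n (fun s => P pre s * nrm U (h + n) (fun u => it U m' h b s u - it U m h b s u))
  <= gam * \sum_(j < n) SS j (fun s => P pre s * nrm U (h + j) (it U m' h b s)).
Proof.
elim: n h pre b => [|n IH] h pre b h1 hH.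
  rewrite big_ord0 mulr0 /= mul1r /nrm big1 // => u _; by rewrite subrr normr0.
have hh : (1 <= h < H)%N by rewrite h1 /=; apply: leq_trans hH; rewrite addnS ltnS leq_addr.
have hH' : (h.+1 + n <= H)%N by rewrite addSnnS.
set c0 := N%:R / alpha * (Uc%:R * eps_op * nrm U h b).
set S := fun (x : O * A) (j : nat) => SS j (fun s => P (rcons pre x) s *
           nrm U (h.+1 + j) (it U m' h.+1 (step U m' h x b) s)).
have step1 : forall x : O * A, SS n (fun s => P pre (x :: s) *
     nrm U (h + n.+1) (fun u => it U m' h b (x :: s) u - it U m h b (x :: s) u))
   <= pol pre x.1 x.2 * (gam * \sum_(j < n) S x j + c0).
  move=> [o a].
  set b1 := step U m' h (o, a) b; set b2 := step U m h (o, a) b.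
  apply: le_trans (_ : SS n (fun s => pol pre o a * (P (rcons pre (o, a)) s *
      nrm U (h.+1 + n) (fun u => it U m' h.+1 b1 s u - it U m h.+1 b1 s u) +
      P (rcons pre (o, a)) s * nrm U (h.+1 + n) (it U m h.+1 (fun v => 1 * b1 v + (-1) * b2 v) s))) <= _).
    apply: SS_le => s hs.
    rewrite -addSnnS.
    change (P pre ((o, a) :: s)) with (pol pre o a * P (rcons pre (o, a)) s).
    rewrite -mulrA; apply: ler_wpM2l; first by case: Hpol.
    rewrite -mulrDr; apply: ler_wpM2l; first exact: pol_ge0.
    rewrite /nrm -big_split; apply: ler_sum => u _ /=.
    rewrite it_lin2 !mul1r mulN1r.
    rewrite -/b1 -/b2.
    rewrite (_ : it U m' h.+1 b1 s u - it U m h.+1 b2 s u =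
       (it U m' h.+1 b1 s u - it U m h.+1 b1 s u) + (it U m h.+1 b1 s u - it U m h.+1 b2 s u)).
      exact: ler_normD.
    by rewrite addrA subrK.
  rewrite SS_scale SS_add; apply: ler_wpM2l; first by case: Hpol.
  apply: lerD; first exact: IH.
  apply: le_trans (Tbound _ _ _ _) _ => //.
  rewrite /c0; apply: ler_wpM2l; first by apply: divr_ge0; [apply: ler0n | apply: ltW].
  apply: le_trans (Mdiff _ _ hh).
  by apply: eqle; apply: eq_bigr => u _; rewrite mul1r mulN1r.
rewrite SS_S; apply: le_trans (ler_sum _ (fun x _ => step1 x)) _.
apply: eqle.
have RS : forall j, SS j.+1 (fun s => P pre s * nrm U (h + j.+1) (it U m' h b s)) =
    \sum_(x : O * A) pol pre x.1 x.2 * S x j.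
  move=> j; rewrite SS_S; apply: eq_bigr => [[o a]] _; rewrite /S -SS_scale -addSnnS.
  by apply: SS_ext => s _ /=; rewrite mulrA.
rewrite big_ord_recl /= mul1r addn0.
rewrite (eq_bigr (fun j : 'I_n => \sum_(x : O * A) pol pre x.1 x.2 * S x j)); last first.
  by move=> j _; rewrite ?lift0 -RS.
rewrite (eq_bigr (fun x => gam * (pol pre x.1 x.2 * \sum_(j < n) S x j) + pol pre x.1 x.2 * c0)); last first.
  by move=> x _; rewrite mulrDr mulrCA.
rewrite big_split /= -mulr_sumr -mulr_suml Spol exchange_big /=.
under [in RHS]eq_bigr do rewrite -mulr_sumr.
rewrite /c0 /gam; ring.
Qed.

Lemma gam_val : gam = eps1 / (4 * H%:R * N%:R).
Proof.
have a0 : alpha != 0 by rewrite gt_eqF.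
have n0 : N%:R != 0 :> R by rewrite pnatr_eq0 -lt0n N_pos.
have u0 : Uc%:R != 0 :> R by rewrite pnatr_eq0 -lt0n Uc_pos.
have o0 : #|O|%:R != 0 :> R by rewrite pnatr_eq0 -lt0n O_pos.
have h0 : H%:R != 0 :> R by rewrite pnatr_eq0 -lt0n HH.
rewrite /gam /eps_op; field.
by rewrite a0 n0 u0 o0 h0.
Qed.

Definition D k := SS k (fun s => P [::] s *
  nrm U (1 + k) (fun u => it U m' 1 q0' s u - it U m 1 (q [::]) s u)).

Lemma numeric k : (k < H)%N -> gam * (k%:R * (N%:R + eps1)) + gam <= eps1.
Proof.
move=> hk; rewrite gam_val.
have hN : 1 <= N%:R :> R by rewrite ler1n N_pos.
have hkH : k%:R + 1 <= H%:R :> R by rewrite natr1 ler_nat.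
have hk0 : 0 <= k%:R :> R by apply: ler0n.
have hZ : 0 < 4 * H%:R * N%:R :> R.
  by rewrite !mulr_gt0 // ?ltr0n ?HH ?N_pos.
have h1 : k%:R * eps1 <= k%:R * N%:R by apply: ler_wpM2l.
have h2 : N%:R * (k%:R + 1) <= N%:R * H%:R :> R by nra.
have hY : k%:R * (N%:R + eps1) + 1 <= 4 * H%:R * N%:R.
  have h3 : 0 <= N%:R * H%:R :> R by apply: mulr_ge0; apply: ler0n.
  rewrite mulrDr; lra.
rewrite -[X in _ <= X](divfK (negbT (gt_eqF hZ))).
rewrite -[X in _ + X <= _]mulr1 -mulrDr.
by apply: ler_wpM2l => //; apply: divr_ge0; apply: ltW.
Qed.

Lemma Dbound k : (k < H)%N -> D k <= eps1.
Proof.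
elim/ltn_ind: k => k IHk hk.
have h1k : (1 + k <= H)%N by rewrite add1n.
apply: le_trans (_ : SS k (fun s => P [::] s * nrm U (1 + k)
      (fun u => it U m' 1 q0' s u - it U m 1 q0' s u)) +
    SS k (fun s => P [::] s * nrm U (1 + k)
      (it U m 1 (fun v => 1 * q0' v + (-1) * q [::] v) s)) <= _).
  rewrite -SS_add; apply: SS_le => s _; rewrite -mulrDr; apply: ler_wpM2l; first exact: pol_ge0.
  rewrite /nrm -big_split; apply: ler_sum => u _ /=; rewrite it_lin2 !mul1r mulN1r.
  rewrite (_ : it U m' 1 q0' s u - it U m 1 (q [::]) s u =
     (it U m' 1 q0' s u - it U m 1 q0' s u) + (it U m 1 q0' s u - it U m 1 (q [::]) s u)).
    exact: ler_normD.
  by rewrite addrA subrK.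
apply: le_trans (lerD (Ebound _ _ _ _) (Tbound _ _ _ _)) _ => //.
have hZ : forall j, (j < k)%N -> SS j (fun s => P [::] s * nrm U (1 + j) (it U m' 1 q0' s))
    <= N%:R + eps1.
  move=> j hj.
  apply: le_trans (_ : SS j (fun s => P [::] s * nrm U (1 + j) (it U m 1 (q [::]) s)) +
      SS j (fun s => P [::] s * nrm U (1 + j)
        (fun u => it U m' 1 q0' s u - it U m 1 (q [::]) s u)) <= _).
    rewrite -SS_add; apply: SS_le => s _; rewrite -mulrDr; apply: ler_wpM2l; first exact: pol_ge0.
    rewrite /nrm -big_split; apply: ler_sum => u _ /=.
    rewrite {1}(_ : it U m' 1 q0' s u = it U m 1 (q [::]) s u +
        (it U m' 1 q0' s u - it U m 1 (q [::]) s u)); first exact: ler_normD.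
    by rewrite addrC subrK.
  apply: lerD; last exact: (IHk j hj (ltn_trans hj hk)).
  by apply: (LqS (h := 1)) => //; rewrite add1n; apply: ltn_trans hj hk.
have hsum : \sum_(j < k) SS j (fun s => P [::] s * nrm U (1 + j) (it U m' 1 q0' s))
    <= k%:R * (N%:R + eps1).
  apply: le_trans (_ : _ <= \sum_(j < k) (N%:R + eps1)) _.
    by apply: ler_sum => j _; apply: hZ.
  by rewrite sumr_const card_ord mulr_natl.
have hq : nrm U 1 (fun v => 1 * q0' v + (-1) * q [::] v) <= Uc%:R * eps_op.
  rewrite /nrm; apply: le_trans (_ : _ <= \sum_(u <- U 1) eps_op) _.
    rewrite big_seq [X in _ <= X]big_seq; apply: ler_sum => u hu.
    by rewrite mul1r mulN1r distrC; apply: Hq0.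
  rewrite sum_const_seq; apply: ler_wpM2r; first exact: eps_ge0.
  by rewrite ler_nat L_sizeU // leqnn HH.
have hg : N%:R / alpha * nrm U 1 (fun v => 1 * q0' v + (-1) * q [::] v) <= gam.
  apply: le_trans (ler_wpM2l _ hq) _; first by apply: divr_ge0; [apply: ler0n | apply: ltW].
  rewrite /gam -[X in X <= _]mulr1 mulrA; apply: ler_wpM2l.
    by apply: mulr_ge0; [apply: mulr_ge0; [exact: NA_ge0 | exact: ler0n] | exact: eps_ge0].
  by rewrite ler1n O_pos.
apply: le_trans (numeric hk).
apply: lerD => //; apply: ler_wpM2l => //.
rewrite gam_val; apply: divr_ge0; first exact: ltW.
by rewrite !mulr_ge0 ?ler0n.
Qed.

Lemma main_bound : \sum_(t : H.-tuple (O * A))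
   `|Ptraj' U m' q0' pol (tval t) - Ptraj K pol (tval t)| <= eps1.
Proof.
rewrite (SS_tuple H (fun s => `|Ptraj' U m' q0' pol s - Ptraj K pol s|)).
rewrite -(prednK HH) SS_rcons.
apply: le_trans (Dbound (k := H.-1) _); last by rewrite prednK.
rewrite /D add1n prednK //; apply: SS_le => s hs.
have hsH : (1 + size s)%N = H by rewrite hs add1n prednK.
set g := fun u => it U m' 1 q0' s u - it U m 1 (q [::]) s u.
have ej : forall x : O * A, it U m 1 (q [::]) s ([:: x.1], [::]) = hist_prob K s * K s x.1.
  move=> x.
  have -> : q [::] = jp K [::].
    by apply: functional_extensionality => v; rewrite /q Ptest_jp /hist_prob /= invr1 mul1r.
  rewrite (@F3 s 1 [::] erefl erefl); first by rewrite /jp /=.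
    by rewrite hsH.
  by rewrite hsH HUo.
have e : forall x : O * A, `|Ptraj' U m' q0' pol (rcons s x) - Ptraj K pol (rcons s x)| =
    P [::] s * (pol s x.1 x.2 * `|g ([:: x.1], [::])|).
  move=> x; rewrite /Ptraj' /Ptraj /pol_prob fwd_rcons pol_rcons traj_split pol_rcons cat0s.
  rewrite (_ : hist_prob_aux K [::] (rcons s x) = it U m 1 (q [::]) s ([:: x.1], [::])); last first.
    by rewrite ej -hp_rcons.
  rewrite -mulrBl normrM [`|P [::] s * _|]ger0_norm; last first.
    by rewrite mulr_ge0 ?pol_ge0 //; case: Hpol.
  by rewrite mulrC -mulrA.
rewrite (eq_bigr _ (fun x _ => e x)) -mulr_sumr; apply: ler_wpM2l; first exact: pol_ge0.
rewrite -(pair_bigA _ (fun o a => pol s o a * `|g ([:: o], [::])|)) /=.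
rewrite (eq_bigr (fun o => `|g ([:: o], [::])|)); last first.
  by move=> o _; rewrite -mulr_suml; case: Hpol => _ ->; rewrite mul1r.
rewrite /nrm -(big_map (fun o : O => ([:: o], [::] : seq A)) xpredT (fun u => `|g u|)).
apply: sub_sum_le.
- by rewrite map_inj_uniq ?index_enum_uniq // => a b [].
- by apply: L_uniqU; rewrite leqnn HH.
- by move=> u /mapP [o _ ->]; apply: HUo.
- by move=> u; apply: normr_ge0.
Qed.

End Main.

Theorem lemma17 (R : realFieldType) (O A : finType) (H : nat)
    (U : nat -> seq (test O A)) (K : hist O A -> O -> R)
    (m : nat -> O -> A -> test O A -> test O A -> R)
    (alpha eps1 : R)
    (m' : nat -> O -> A -> test O A -> test O A -> R)
    (q0' : test O A -> R) :
  (0 < H)%N ->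
  is_process K ->
  core_test_sets K U H ->
  0 < alpha ->
  (forall k, (k < H)%N -> core_matrix_bound K U k alpha) ->
  (forall o : O, ([:: o], [::]) \in U H) ->
  psr_params K U H m ->
  0 < eps1 -> eps1 <= (UA_card U H)%:R ->
  let eps_op := alpha * eps1 /
      (4 * H%:R * ((UA_card U H)%:R) ^+ 2 * (U_card U H)%:R * #|O|%:R) in
  (forall h o a u v, (1 <= h < H)%N -> u \in U h.+1 -> v \in U h ->
     `|m h o a u v - m' h o a u v| <= eps_op) ->
  (forall u, u \in U 1%N -> `|Ptest K u [::] - q0' u| <= eps_op) ->
  forall pol : hist O A -> O -> A -> R, is_policy pol ->
    \sum_(t : H.-tuple (O * A)%type)
       `|Ptraj' U m' q0' pol (tval t) - Ptraj K pol (tval t)| <= eps1.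
Proof.
move=> HH HK Hcore Halpha Hcm HUo Hpsr He1 He1N eps_op Hm' Hq0 pol Hpol.
exact: (main_bound HH HK Hcore Halpha Hcm HUo Hpsr He1 He1N Hm' Hq0 Hpol).
Qed.
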